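(* Let $G$ be an abelian group and let $A,B\subseteq G$ be finite, nonempty subsets with $H=\mathsf H(A+B)=\mathsf H(B)$. Then $|(A\cup \{x\})+B|\geq |(A\cup \{x\})+H|+|B+H|-|H|$ for any $x\in G$.
   Context: $\mathsf H(A)=\{g\in G:g+A=A\}$ denotes the stabilizer of $A$; $A+B=\{a+b:a\in A,b\in B\}$. *)

(* Defs.v *)
From HB Require Import structures.
From mathcomp Require Import all_boot all_algebra.
From mathcomp Require Import finmap.
Set Implicit Arguments. Unset Strict Implicit. Unset Printing Implicit Defensive.
Import GRing.Theory.
Local Open Scope ring_scope.
Local Open Scope fset_scope.

Definition sumset (G : zmodType) (A B : {fset G}) : {fset G} :=
  [fset (a + b)%R | a in A, b in B].

Definition translate (G : zmodType) (g : G) (C : {fset G}) : {fset G} :=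
  [fset (g + c)%R | c in C].

Definition is_stabilizer (G : zmodType) (C H : {fset G}) : Prop :=
  forall g : G, g \in H <-> translate g C = C.

(* Main.v *)
Require Import Defs.
From mathcomp Require Import all_boot all_algebra.
From mathcomp Require Import finmap.
From Stdlib Require Import Classical.
From mathcomp Require Import zify.
Set Implicit Arguments. Unset Strict Implicit. Unset Printing Implicit Defensive.
Import GRing.Theory.
Local Open Scope fset_scope.


Section Basic.
Variable G : zmodType.
Implicit Types (A B C D X Y : {fset G}) (g h x y : G).

Lemma sumsetP A B x :
  reflect (exists a, exists b, [/\ a \in A, b \in B & x = (a + b)%R]) (x \in sumset A B).
Proof.
apply: (iffP (imfset2P _ _ _ _ _)).
  by move=> [a aA [b bB ->]]; exists a, b.
by move=> [a [b [aA bB ->]]]; exists a => //; exists b.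
Qed.

Lemma mem_sumset A B a b : a \in A -> b \in B -> (a + b)%R \in sumset A B.
Proof. by move=> aA bB; apply/sumsetP; exists a, b. Qed.

Lemma translateP g C x : (x \in translate g C) = ((x - g)%R \in C).
Proof.
apply/imfsetP/idP => [[c cC ->]|xC]; first by rewrite [(g + c)%R]addrC addrK.
by exists (x - g)%R => //; rewrite addrC subrK.
Qed.

Lemma mem_translate g C c : c \in C -> (g + c)%R \in translate g C.
Proof. by move=> cC; rewrite translateP [(g + c)%R]addrC addrK. Qed.

Lemma card_translate g C : #|` translate g C| = #|` C|.
Proof. by rewrite /translate card_imfset //=; apply: addrI. Qed.


Lemma sumsetC A B : sumset A B = sumset B A.
Proof.
apply/fsetP=> x; apply/sumsetP/sumsetP=> -[a [b [aA bB ->]]];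
  by exists b, a; rewrite addrC.
Qed.

Lemma sumset_sub A B A' B' :
  A `<=` A' -> B `<=` B' -> sumset A B `<=` sumset A' B'.
Proof.
move=> /fsubsetP sA /fsubsetP sB; apply/fsubsetP=> x /sumsetP[a [b [aA bB ->]]].
by apply: mem_sumset; [apply: sA | apply: sB].
Qed.

Lemma translate_sumset g A B : sumset A (translate g B) = translate g (sumset A B).
Proof.
apply/fsetP=> x; rewrite translateP; apply/sumsetP/sumsetP.
  move=> [a [b [aA]]]; rewrite translateP => bB ->.
  by exists a, (b - g)%R; split => //; rewrite addrA.
move=> [a [b [aA bB e]]]; exists a, (g + b)%R; split => //.
  by apply: mem_translate.
by rewrite addrCA -e addrC subrK.
Qed.

Lemma translate_comp g h B : translate h (translate g B) = translate (h + g) B.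
Proof.
by apply/fsetP=> x; rewrite !translateP opprD addrA.
Qed.

Lemma translate0 B : translate 0 B = B.
Proof. by apply/fsetP=> x; rewrite translateP subr0. Qed.

Lemma sumset_translate_l g A B : sumset (translate g A) B = translate g (sumset A B).
Proof. by rewrite sumsetC translate_sumset sumsetC. Qed.

Lemma sumset_neq0 A B : A != fset0 -> B != fset0 -> sumset A B != fset0.
Proof.
move=> /fset0Pn[a aA] /fset0Pn[b bB]; apply/fset0Pn; exists (a + b)%R.
exact: mem_sumset.
Qed.

Lemma translate_sub_sumset A B b : b \in B -> translate b A `<=` sumset A B.
Proof.
move=> bB; apply/fsubsetP=> x; rewrite translateP => xA.
by rewrite -(subrK b x); apply: mem_sumset.
Qed.

Lemma card_sumset_l A B : B != fset0 -> (#|` A| <= #|` sumset A B|)%N.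
Proof.
move=> /fset0Pn[b bB]; rewrite -(card_translate b).
exact/fsubset_leq_card/translate_sub_sumset.
Qed.

Lemma card_sumset_r A B : A != fset0 -> (#|` B| <= #|` sumset A B|)%N.
Proof. by move=> An; rewrite sumsetC card_sumset_l. Qed.

Lemma translate_eq g C : (translate g C == C) = (translate g C `<=` C).
Proof. by rewrite eqEfcard card_translate leqnn andbT. Qed.

Definition negs C := [fset (- c)%R | c in C].
Definition stab C := [fset g in sumset C (negs C) | translate g C == C].

Lemma stab_translate C h : h \in stab C -> translate h C = C.
Proof. by rewrite !inE => /andP[_ /eqP]. Qed.

Lemma stabE C g : C != fset0 ->
  (g \in stab C) <-> (forall c, c \in C -> (g + c)%R \in C).
Proof.
move=> /fset0Pn[c0 c0C]; split.
  by move=> /stab_translate e c cC; rewrite -e; apply: mem_translate.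
move=> h; rewrite !inE /= translate_eq; apply/andP; split; last first.
  by apply/fsubsetP=> x; rewrite translateP => /h; rewrite addrC subrK.
rewrite -(addrK c0 g); apply: mem_sumset; first exact: h.
by apply/imfsetP; exists c0.
Qed.

Lemma stabP C g : C != fset0 ->
  reflect (forall c, c \in C -> (g + c)%R \in C) (g \in stab C).
Proof. by move=> Cn; apply: (iffP idP) => /(stabE g Cn). Qed.

Lemma stab_add C g c : g \in stab C -> c \in C -> (g + c)%R \in C.
Proof. by move=> /stab_translate e cC; rewrite -e; apply: mem_translate. Qed.

Section StabGroup.
Variable C : {fset G}.
Hypothesis Cn : C != fset0.

Lemma stab0 : (0%R : G) \in stab C.
Proof. by apply/stabP => // c cC; rewrite add0r. Qed.

Lemma stabD g h : g \in stab C -> h \in stab C -> (g + h)%R \in stab C.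
Proof.
move=> gS hS; apply/stabP => // c cC; rewrite -addrA.
by apply: stab_add gS _; apply: stab_add hS _.
Qed.

Lemma stabN g : g \in stab C -> (- g)%R \in stab C.
Proof.
move=> gS; apply/stabP => // c cC.
have : c \in translate g C by rewrite (stab_translate gS).
by rewrite translateP addrC.
Qed.

Lemma stabB g h : g \in stab C -> h \in stab C -> (g - h)%R \in stab C.
Proof. by move=> gS hS; apply: stabD => //; apply: stabN. Qed.

Lemma stab_addr c g : g \in stab C -> c \in C -> (c + g)%R \in C.
Proof. by rewrite addrC; apply: stab_add. Qed.

Lemma sumset_stab : sumset C (stab C) = C.
Proof.
apply/fsetP=> x; apply/sumsetP/idP.
  by move=> [c [k [cC kK ->]]]; apply: stab_addr.
by move=> xC; exists x, 0%R; rewrite addr0; split => //; apply: stab0.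
Qed.

Lemma sumset_stab_sub X : X `<=` sumset X (stab C).
Proof.
apply/fsubsetP=> x xX; rewrite -(addr0 x); apply: mem_sumset => //; exact: stab0.
Qed.

Lemma sumset_stab2 X Y :
  sumset (sumset X (stab C)) (sumset Y (stab C)) = sumset (sumset X Y) (stab C).
Proof.
apply/fsetP=> z; apply/sumsetP/sumsetP.
  move=> [u [v [/sumsetP[x [k [xX kK ->]]] /sumsetP[y [k' [yY k'K ->]]] ->]]].
  exists (x + y)%R, (k + k')%R; split; first exact: mem_sumset.
    exact: stabD.
  by rewrite addrACA.
move=> [u [k [/sumsetP[x [y [xX yY ->]]] kK ->]]].
exists (x + k)%R, (y + 0)%R; split; try (apply: mem_sumset => //; exact: stab0).
by rewrite addr0 addrAC.
Qed.

End StabGroup.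

Lemma stab_translate_eq C g : C != fset0 -> stab (translate g C) = stab C.
Proof.
move=> Cn; have Tn : translate g C != fset0.
  by rewrite -cardfs_gt0 card_translate cardfs_gt0.
apply/fsetP=> h; apply/stabP/stabP => // hS c.
  move=> cC; have := hS (g + c)%R (mem_translate g cC).
  by rewrite translateP addrCA addrC addrK.
rewrite translateP => cC; rewrite translateP -addrA; exact: hS.
Qed.

End Basic.


Section Core2.
Variable G : zmodType.
Implicit Types (X Y : {fset G}).
Definition W X Y := (#|` X| + #|` Y| <= #|` sumset X Y| + #|` stab (sumset X Y)|)%N.

Variables (A B : {fset G}).
Hypotheses (An : A != fset0) (Bn : B != fset0).
Hypothesis BA : (#|` B| <= #|` A|)%N.
Local Notation S := (sumset A B).
Local Notation H := (stab (sumset A B)).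
Hypothesis IH1 : forall X Y, X != fset0 -> Y != fset0 ->
  (#|` sumset X Y| < #|` S|)%N -> W X Y.
Hypothesis IH2 : forall X Y, X != fset0 -> Y != fset0 ->
  #|` sumset X Y| = #|` S| -> (#|` A| + #|` B| < #|` X| + #|` Y|)%N -> W X Y.
Hypothesis IH3 : forall X Y, X != fset0 -> Y != fset0 ->
  #|` sumset X Y| = #|` S| -> (#|` X| + #|` Y| = #|` A| + #|` B|)%N ->
  (minn #|` X| #|` Y| < #|` B|)%N -> W X Y.
Hypothesis nW : (#|` S| + #|` H| < #|` A| + #|` B|)%N.
Hypothesis In : A `&` B != fset0.
Hypothesis BnA : ~~ (B `<=` A).
Hypothesis maxim : forall h, A `&` translate h B != fset0 ->
  ~~ (translate h B `<=` A) -> (#|` A `&` translate h B| <= #|` A `&` B|)%N.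

Lemma ltn_cardU X Y : ~~ (Y `<=` X) -> (#|` X| < #|` X `|` Y|)%N.
Proof.
move=> nYX; apply: fproper_ltn_card; rewrite fproperE fsubsetUl /=.
apply: contra nYX => /fsubsetP s; apply/fsubsetP=> y yY; apply: s.
by rewrite inE yY orbT.
Qed.

Lemma neq0_sub X Y : X != fset0 -> X `<=` Y -> Y != fset0.
Proof.
move=> /fset0Pn[x xX] /fsubsetP s; apply/fset0Pn; exists x; exact: s.
Qed.

Lemma Sat X Y : sumset (A `|` X) (B `|` Y) `<=` S -> X `<=` A /\ Y `<=` B.
Proof.
move=> sub.
have eS : sumset (A `|` X) (B `|` Y) = S.
  apply/eqP; rewrite eqEfsubset sub /=.
  by apply: sumset_sub; apply: fsubsetUl.
have AXn : A `|` X != fset0 by apply: neq0_sub An (fsubsetUl _ _).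
have BYn : B `|` Y != fset0 by apply: neq0_sub Bn (fsubsetUl _ _).
have cA : (#|` A| <= #|` A `|` X|)%N by apply/fsubset_leq_card/fsubsetUl.
have cB : (#|` B| <= #|` B `|` Y|)%N by apply/fsubset_leq_card/fsubsetUl.
split; apply/negPn/negP => ns.
  have := ltn_cardU ns; move=> lt.
  have := IH2 AXn BYn (congr1 (fun Z => #|` Z|) eS); rewrite /W eS; lia.
have := ltn_cardU ns; move=> lt.
have := IH2 AXn BYn (congr1 (fun Z => #|` Z|) eS); rewrite /W eS; lia.
Qed.


Local Notation I := (A `&` B).
Local Notation U := (A `|` B).
Local Notation C := (sumset (A `|` B) (A `&` B)).
Local Notation K := (stab (sumset (A `|` B) (A `&` B))).

Lemma Un : U != fset0. Proof. exact: neq0_sub An (fsubsetUl _ _). Qed.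
Lemma Cn : C != fset0. Proof. exact: sumset_neq0 Un In. Qed.

Lemma memC u i : u \in U -> i \in I -> (u + i)%R \in C.
Proof. exact: mem_sumset. Qed.

Lemma CK c k : c \in C -> k \in K -> (c + k)%R \in C.
Proof. by move=> cC kK; exact: (stab_addr kK cC). Qed.

Lemma CS : C `<=` S.
Proof.
apply/fsubsetP=> x /sumsetP[u [i [uU iI ->]]].
move: uU iI; rewrite !inE => /orP[uA|uB] /andP[iA iB].
  exact: mem_sumset.
by rewrite addrC; apply: mem_sumset.
Qed.

Lemma IB : (#|` I| < #|` B|)%N.
Proof.
apply: fproper_ltn_card; rewrite fproperE fsubsetIr /=.
apply: contra BnA => /fsubsetP s; apply/fsubsetP=> b /s; rewrite inE => /andP[].
by [].
Qed.

Lemma cardUI : (#|` U| + #|` I| = #|` A| + #|` B|)%N.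
Proof. exact: cardfsUI. Qed.

Lemma CneS : C != S.
Proof.
apply/negP => /eqP e.
have cI : (#|` I| <= #|` U|)%N.
  apply: fsubset_leq_card; apply/fsubsetP=> x; rewrite !inE => /andP[-> _]//.
have := IH3 Un In (congr1 (fun Z => #|` Z|) e) cardUI.
rewrite /W e (minn_idPr cI); have := IB; have := cardUI.
move: nW; lia.
Qed.

Lemma CltS : (#|` C| < #|` S|)%N.
Proof. by apply: fproper_ltn_card; rewrite fproperEneq CneS CS. Qed.

Lemma KS1 : (#|` sumset U K| + #|` sumset I K| <= #|` C| + #|` K|)%N.
Proof.
have e : sumset (sumset U K) (sumset I K) = C.
  by rewrite sumset_stab2 ?Cn // sumset_stab // Cn.
have UKn : sumset U K != fset0 by apply: neq0_sub Un (sumset_stab_sub Cn _).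
have IKn : sumset I K != fset0 by apply: neq0_sub In (sumset_stab_sub Cn _).
have := IH1 UKn IKn; rewrite /W e; apply; exact: CltS.
Qed.


Lemma IperK i k : i \in I -> k \in K -> (i + k)%R \in I.
Proof.
move=> iI kK.
have sub : sumset (A `|` sumset I K) (B `|` sumset I K) `<=` S.
  apply/fsubsetP=> z /sumsetP[u [v [uX vY ->]]].
  move: uX vY; rewrite !in_fsetU.
  case/orP=> [uA | /sumsetP[i1 [k1 [i1I k1K ->]]]];
    case/orP=> [vB | /sumsetP[i2 [k2 [i2I k2K ->]]]].
  - exact: mem_sumset.
  - rewrite addrA; apply: (fsubsetP CS); apply: CK k2K.
    by apply: memC i2I; rewrite in_fsetU uA.
  - rewrite addrAC [(i1 + v)%R]addrC; apply: (fsubsetP CS); apply: CK k1K.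
    by apply: memC i1I; rewrite in_fsetU vB orbT.
  - rewrite addrACA; apply: (fsubsetP CS); apply: CK; last exact: (stabD Cn k1K k2K).
    by apply: memC i2I; move: i1I; rewrite !inE => /andP[-> _].
have [s1 s2] := Sat sub.
have m : (i + k)%R \in sumset I K by apply: mem_sumset.
by rewrite in_fsetI (fsubsetP s1 _ m) (fsubsetP s2 _ m).
Qed.

Lemma IK : sumset I K = I.
Proof.
apply/eqP; rewrite eqEfsubset sumset_stab_sub ?Cn // andbT.
by apply/fsubsetP=> x /sumsetP[i [k [iI kK ->]]]; apply: IperK.
Qed.

Lemma Star :
  (#|` S `\` C| + #|` H| + #|` sumset U K `\` U| < #|` K|)%N.
Proof.
rewrite (cardfsDS CS) (cardfsDS (sumset_stab_sub Cn U)).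
have := KS1; rewrite IK; have := cardUI; have := nW.
have := fsubset_leq_card CS; have := fsubset_leq_card (sumset_stab_sub Cn U).
lia.
Qed.

Lemma Gen a b : a \in A -> b \in B -> (a + b)%R \notin C ->
  (#|` K| <= #|` S `\` C| + #|` sumset U K `\` U| + #|` B `&` translate a K|)%N.
Proof.
move=> aA bB nC.
set aK := translate a K.
have aU : a \in U by rewrite in_fsetU aA.
have h1 : aK `\` U `<=` sumset U K `\` U.
  apply/fsubsetP=> x; rewrite !in_fsetD => /andP[xnU xaK]; rewrite xnU /=.
  move: xaK; rewrite translateP => xK.
  have -> : x = (a + (x - a))%R by rewrite addrC subrK.
  exact: mem_sumset.
have h2 : aK `&` U `<=` (A `&` aK) `|` (B `&` aK).
  apply/fsubsetP=> x; rewrite !(in_fsetI, in_fsetU) => /andP[xa /orP[xA|xB]].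
    by rewrite xA xa.
  by rewrite xB xa orbT.
have h3 := cardfsID U aK.
have h4 : translate b (A `&` aK) `<=` S `\` C.
  apply/fsubsetP=> y; rewrite translateP in_fsetI in_fsetD => /andP[yA yaK].
  apply/andP; split; last first.
    by rewrite -(subrK b y); apply: mem_sumset.
  apply: contra nC => yC.
  move: yaK; rewrite translateP => dK.
  have -> : (a + b)%R = (y + - (y - b - a))%R.
    by rewrite !opprB addrCA [(b - y)%R]addrC addNKr.
  by apply: CK yC _; exact: (stabN Cn dK).
have c1 := fsubset_leq_card h1.
have c2 := fsubset_leq_card h2.
have c4 := fsubset_leq_card h4.
rewrite card_translate in c4.
have c5 := cardfsUI (A `&` aK) (B `&` aK).
have c6 : #|` aK| = #|` K| by rewrite card_translate.
lia.
Qed.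

Lemma Contra a b : a \in A -> b \in B -> (a + b)%R \notin C ->
  (#|` B `&` translate a K| <= #|` H|)%N -> False.
Proof.
move=> aA bB nC le; have := Gen aA bB nC; have := Star; lia.
Qed.

Lemma F_I a b k : a \in A -> b \in B -> (a + b)%R \notin C -> k \in K ->
  (a + k)%R \notin I.
Proof.
move=> aA bB nC kK; apply/negP => akI.
have aI : a \in I.
  by rewrite -(addrK k a); apply: IperK akI _; exact: (stabN Cn kK).
have : (b + a)%R \in C by apply: memC aI; rewrite in_fsetU bB orbT.
by rewrite addrC (negbTE nC).
Qed.

Lemma M1 k b : k \in K -> b \in B -> (b + k)%R \in A ->
  ~~ (translate k B `<=` A) -> (b + k)%R \in I.
Proof.
move=> kK bB bkA nk.
have sub : I `<=` A `&` translate k B.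
  apply/fsubsetP=> i iI; rewrite in_fsetI translateP.
  have iA : i \in A by move: iI; rewrite in_fsetI => /andP[].
  have : (i - k)%R \in I by apply: IperK iI _; exact: (stabN Cn kK).
  by rewrite iA in_fsetI => /andP[_ ->].
have ne : A `&` translate k B != fset0 := neq0_sub In sub.
have le := maxim ne nk.
have e : I = A `&` translate k B by apply/eqP; rewrite eqEfcard sub le.
by rewrite e in_fsetI bkA translateP addrK bB.
Qed.


Local Notation P := [fset k in K | translate k B `<=` A].

Lemma inP k : (k \in P) = (k \in K) && (translate k B `<=` A).
Proof. by rewrite !inE. Qed.

Lemma Kmem a x : (x \in translate a K) = ((x - a)%R \in K).
Proof. exact: translateP. Qed.

Lemma KB x y : x \in K -> y \in K -> (x - y)%R \in K.
Proof. by move=> xK yK; apply: (stabB Cn xK yK). Qed.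
Lemma KD x y : x \in K -> y \in K -> (x + y)%R \in K.
Proof. by move=> xK yK; apply: (stabD Cn xK yK). Qed.
Lemma KN x : x \in K -> (- x)%R \in K.
Proof. by move=> xK; apply: (stabN Cn xK). Qed.
Lemma K0 : (0%R : G) \in K.
Proof. exact: (stab0 Cn). Qed.

Lemma noBadA a b : a \in A -> b \in B -> (a + b)%R \notin C ->
  B `&` translate a K = fset0 -> False.
Proof. by move=> aA bB nC e; apply: (Contra aA bB nC); rewrite e cardfs0. Qed.

Lemma caseI : P = fset0 -> False.
Proof.
move=> P0.
have /fsubsetPn[x xS xnC] : ~~ (S `<=` C).
  by apply: contra CneS => sub; rewrite eqEfsubset CS sub.
case/sumsetP: xS xnC => a [b [aA bB ->]] nC.
apply: (noBadA aA bB nC); apply/eqP/negPn/negP => /fset0Pn[b' ].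
rewrite in_fsetI Kmem => /andP[b'B dK].
have kK : (a - b')%R \in K by rewrite -opprB; apply: KN.
have nk : ~~ (translate (a - b')%R B `<=` A).
  apply/negP => sub; have : (a - b')%R \in P by rewrite inP kK sub.
  by rewrite P0 in_fset0.
have e : (b' + (a - b'))%R = a by rewrite addrC subrK.
have := M1 kK b'B; rewrite e => /(_ aA nk) aI.
by have := F_I aA bB nC K0; rewrite addr0 aI.
Qed.

Lemma AP b' : b' \in B -> (forall k, k \in K -> (b' + k)%R \notin I) ->
  forall k, k \in K -> ((b' + k)%R \in A) = (k \in P).
Proof.
move=> b'B nI k kK; apply/idP/idP.
  move=> bkA; rewrite inP kK /=; apply/negPn/negP => nk.
  by have := nI k kK; rewrite (M1 kK b'B bkA nk).
rewrite inP => /andP[_ /fsubsetP s]; apply: s; rewrite addrC.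
exact: mem_translate.
Qed.


Section CaseII.
Hypothesis Pn : P != fset0.
Local Notation M := (stab P).

Lemma MK m : m \in M -> m \in K.
Proof.
move=> mM; case/fset0Pn: Pn => p pP.
have mpP : (m + p)%R \in P by apply: stab_add mM pP.
have pK : p \in K by move: pP; rewrite inP => /andP[].
have mpK : (m + p)%R \in K by move: mpP; rewrite inP => /andP[].
by have := KB mpK pK; rewrite addrK.
Qed.

Lemma AM a m : a \in A -> m \in M -> (a + m)%R \in A.
Proof.
move=> aA mM; have mK := MK mM.
case: (boolP (I `&` translate a K == fset0)) => [/eqP I0 | /fset0Pn[y]]; last first.
  rewrite in_fsetI Kmem => /andP[yI dK].
  have aI : a \in I.
    have -> : a = (y + - (y - a))%R by rewrite opprB addrCA subrr addr0.
    by apply: IperK yI _; apply: KN.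
  by have := IperK aI mK; rewrite in_fsetI => /andP[].
have nIa : forall k, k \in K -> (a + k)%R \notin I.
  move=> k kK; apply/negP => akI.
  have : (a + k)%R \in I `&` translate a K.
    by rewrite in_fsetI akI; apply: mem_translate.
  by rewrite I0 in_fset0.
case: (boolP (B `&` translate a K == fset0)) => [/eqP B0 | /fset0Pn[b']]; last first.
  rewrite in_fsetI Kmem => /andP[b'B dK].
  have nI : forall k, k \in K -> (b' + k)%R \notin I.
    move=> k kK; have -> : (b' + k)%R = (a + ((b' - a) + k))%R.
      by rewrite addrA [(a + _)%R]addrC subrK.
    by apply: nIa; apply: KD.
  have kK : (a - b')%R \in K by rewrite -opprB; apply: KN.
  have kP : (a - b')%R \in P by rewrite -(AP b'B nI kK) addrC subrK.
  have kmP : ((a - b') + m)%R \in P by apply: stab_addr mM kP.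
  have kmK : ((a - b') + m)%R \in K by apply: KD.
  by move: (AP b'B nI kmK); rewrite kmP addrA [(b' + _)%R]addrC subrK => ->.
have sub : sumset (A `|` [fset (a + m)%R]) (B `|` fset0) `<=` S.
  apply/fsubsetP=> z /sumsetP[u [v [uX vY ->]]].
  move: vY; rewrite in_fsetU in_fset0 orbF => vB.
  move: uX; rewrite in_fsetU in_fset1 => /orP[uA | /eqP ->].
    exact: mem_sumset.
  case: (boolP ((a + v)%R \in C)) => [avC | avnC].
    apply: (fsubsetP CS); rewrite addrAC; exact: CK.
  by case: (noBadA aA vB avnC B0).
have [s _] := Sat sub.
by apply: (fsubsetP s); rewrite in_fset1.
Qed.

Lemma MH m : m \in M -> m \in H.
Proof.
move=> mM; apply/stabP; first exact: sumset_neq0.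
move=> s /sumsetP[a [b [aA bB ->]]].
by rewrite addrA [(m + a)%R]addrC; apply: mem_sumset => //; apply: AM.
Qed.

Lemma caseII : False.
Proof.
have /fsubsetPn[x xS xnC] : ~~ (S `<=` C).
  by apply: contra CneS => sub; rewrite eqEfsubset CS sub.
case/sumsetP: xS xnC => a [b [aA bB ->]] nC.
case: (boolP (B `&` translate a K == fset0)) => [/eqP B0 | /fset0Pn[b']].
  exact: (noBadA aA bB nC B0).
rewrite in_fsetI Kmem => /andP[b'B d'K].
have nIof : forall y, y \in translate a K -> forall k, k \in K -> (y + k)%R \notin I.
  move=> y; rewrite Kmem => dK k kK.
  have -> : (y + k)%R = (a + ((y - a) + k))%R.
    by rewrite addrA [(a + _)%R]addrC subrK.
  by apply: (F_I aA bB nC); apply: KD.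
have sub : B `&` translate a K `<=` translate b' M.
  apply/fsubsetP=> b''; rewrite in_fsetI => /andP[b''B b''aK].
  have d''K : (b'' - a)%R \in K by rewrite -Kmem.
  rewrite translateP; apply/stabP => // p pP.
  have pK : p \in K by move: pP; rewrite inP => /andP[].
  have dK : (b'' - b')%R \in K.
    have -> : (b'' - b')%R = ((b'' - a) - (b' - a))%R.
      by rewrite opprB addrA subrK.
    exact: KB.
  have dpK : ((b'' - b') + p)%R \in K by apply: KD.
  have nI' : forall k, k \in K -> (b' + k)%R \notin I.
    by apply: nIof; rewrite Kmem.
  have nI'' : forall k, k \in K -> (b'' + k)%R \notin I by apply: nIof.
  rewrite -(AP b'B nI' dpK) addrA [(b' + _)%R]addrC subrK.
  by rewrite (AP b''B nI'' pK).
have c1 := fsubset_leq_card sub; rewrite card_translate in c1.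
have c2 : (#|` M| <= #|` H|)%N.
  by apply: fsubset_leq_card; apply/fsubsetP=> m; apply: MH.
by apply: (Contra aA bB nC); apply: leq_trans c2.
Qed.

End CaseII.

Lemma core2 : False.
Proof.
case: (boolP (P == fset0)) => [/eqP|]; [exact: caseI | exact: caseII].
Qed.

End Core2.


Lemma ex_max (T : Type) (Q : T -> Prop) (f : T -> nat) (N : nat) :
  (forall g, Q g -> (f g <= N)%N) -> (exists g, Q g) ->
  exists g, Q g /\ (forall h, Q h -> (f h <= f g)%N).
Proof.
move=> bnd [g0 Qg0].
suff : forall n g, Q g -> (N - f g <= n)%N ->
  exists g', Q g' /\ (forall h, Q h -> (f h <= f g')%N).
  by move=> /(_ (N - f g0) g0 Qg0 (leqnn _)).
elim=> [|n IHn] g Qg le.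
  exists g; split => // h Qh; have := bnd h Qh; have := bnd g Qg; lia.
case: (classic (exists h, Q h /\ (f g < f h)%N)) => [[h [Qh lt]]|nex].
  by apply: (IHn h Qh); have := bnd h Qh; lia.
exists g; split => // h Qh; apply/negPn/negP; rewrite -ltnNge => lt.
by apply: nex; exists h.
Qed.

Section Core.
Variable G : zmodType.
Implicit Types (X Y : {fset G}).
Variables (A B : {fset G}).
Hypotheses (An : A != fset0) (Bn : B != fset0).
Hypothesis BA : (#|` B| <= #|` A|)%N.
Local Notation S := (sumset A B).
Local Notation H := (stab (sumset A B)).
Hypothesis IH1 : forall X Y, X != fset0 -> Y != fset0 ->
  (#|` sumset X Y| < #|` S|)%N -> W X Y.
Hypothesis IH2 : forall X Y, X != fset0 -> Y != fset0 ->
  #|` sumset X Y| = #|` S| -> (#|` A| + #|` B| < #|` X| + #|` Y|)%N -> W X Y.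
Hypothesis IH3 : forall X Y, X != fset0 -> Y != fset0 ->
  #|` sumset X Y| = #|` S| -> (#|` X| + #|` Y| = #|` A| + #|` B|)%N ->
  (minn #|` X| #|` Y| < #|` B|)%N -> W X Y.

Lemma Sn : S != fset0. Proof. exact: sumset_neq0. Qed.

Lemma no_proper :
  (forall g, A `&` translate g B != fset0 -> translate g B `<=` A) -> W A B.
Proof.
move=> hp; case/fset0Pn: Bn => b0 b0B.
have sub : B `<=` translate b0 H.
  apply/fsubsetP=> b bB; rewrite translateP; apply/stabP; first exact: Sn.
  move=> s /sumsetP[a [b'' [aA b''B ->]]].
  set g := (a - b0)%R.
  have ne : A `&` translate g B != fset0.
    apply/fset0Pn; exists a; rewrite in_fsetI aA translateP /g opprB addrCA subrr addr0.
    done.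
  have : (g + b)%R \in A by apply: (fsubsetP (hp g ne)); apply: mem_translate.
  move=> gbA; rewrite addrA; apply: mem_sumset b''B.
  have -> : (b - b0 + a)%R = (g + b)%R.
    by rewrite /g addrAC [X in _ = X]addrAC [(b + a)%R]addrC.
  done.
have c1 := fsubset_leq_card sub; rewrite card_translate in c1.
have c2 := card_sumset_l A Bn.
rewrite /W; lia.
Qed.

Lemma core : W A B.
Proof.
rewrite /W leqNgt; apply/negP => nW.
have [g [[gn gp] gmax]] : exists g, (A `&` translate g B != fset0 /\ ~~ (translate g B `<=` A))
   /\ (forall h, (A `&` translate h B != fset0 /\ ~~ (translate h B `<=` A)) ->
        (#|` A `&` translate h B| <= #|` A `&` translate g B|)%N).
  apply: (@ex_max _ _ _ #|` A|).
    by move=> h _; apply/fsubset_leq_card/fsubsetIl.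
  apply: NNPP => nex.
  have : W A B.
    apply: no_proper => g ne; apply/negPn/negP => ns.
    by apply: nex; exists g.
  by rewrite /W leqNgt nW.
have eS : sumset A (translate g B) = translate g S by rewrite translate_sumset.
have cS : #|` sumset A (translate g B)| = #|` S| by rewrite eS card_translate.
have cB : #|` translate g B| = #|` B| := card_translate g B.
apply: (@core2 G A (translate g B)) => //.
- by rewrite -cardfs_gt0 cB cardfs_gt0.
- by rewrite cB.
- by move=> X Y Xn Yn; rewrite cS; apply: IH1.
- by move=> X Y Xn Yn; rewrite cS cB; apply: IH2.
- by move=> X Y Xn Yn; rewrite cS cB; apply: IH3.
- by rewrite eS stab_translate_eq ?Sn // card_translate cB.
- move=> h n1 n2; rewrite translate_comp; apply: gmax; split => //.
    by rewrite -translate_comp.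
  by rewrite -translate_comp.
Qed.

End Core.


Section Assembly.
Variable G : zmodType.
Implicit Types (A B X Y : {fset G}).

Lemma WC A B : W A B = W B A.
Proof. by rewrite /W sumsetC addnC. Qed.

Lemma lvl3 n s
  (IH1 : forall X Y, X != fset0 -> Y != fset0 -> (#|` sumset X Y| < n)%N -> W X Y)
  (IH2 : forall X Y, X != fset0 -> Y != fset0 -> #|` sumset X Y| = n ->
     (s < #|` X| + #|` Y|)%N -> W X Y) :
  forall m A B, A != fset0 -> B != fset0 -> #|` sumset A B| = n ->
    (#|` A| + #|` B|)%N = s -> (minn #|` A| #|` B| < m)%N -> W A B.
Proof.
elim=> [|m IHm] A B An Bn eS es lt; first by [].
have IH3 : forall X Y, X != fset0 -> Y != fset0 -> #|` sumset X Y| = n ->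
    (#|` X| + #|` Y|)%N = s -> (minn #|` X| #|` Y| < minn #|` A| #|` B|)%N -> W X Y.
  move=> X Y Xn Yn eX sX ltX; apply: IHm => //; lia.
case: (leqP #|` B| #|` A|) => [BA | AB].
  apply: core => //.
  - by rewrite eS.
  - by rewrite eS es.
  - move=> X Y Xn Yn eX sX ltX; apply: IH3 => //; first by rewrite eX eS.
      by rewrite sX.
    by rewrite (minn_idPr BA).
rewrite WC; apply: core => //; first exact: ltnW.
- by rewrite sumsetC eS.
- move=> X Y Xn Yn eX sX; apply: IH2 => //; first by rewrite eX sumsetC.
  by rewrite -es addnC.
- move=> X Y Xn Yn eX sX ltX; apply: IH3 => //; first by rewrite eX sumsetC.
    by rewrite sX addnC.
  by rewrite (minn_idPl (ltnW AB)).
Qed.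

Lemma lvl2 n
  (IH1 : forall X Y, X != fset0 -> Y != fset0 -> (#|` sumset X Y| < n)%N -> W X Y) :
  forall d A B, A != fset0 -> B != fset0 -> #|` sumset A B| = n ->
    (n.*2 - (#|` A| + #|` B|) < d)%N -> W A B.
Proof.
elim=> [|d IHd] A B An Bn eS lt; first by [].
apply: (@lvl3 n (#|` A| + #|` B|) IH1 _ (minn #|` A| #|` B|).+1) => //.
move=> X Y Xn Yn eX sX; apply: IHd => //.
have := card_sumset_l X Yn; have := card_sumset_r Y Xn.
have := card_sumset_l A Bn; have := card_sumset_r B An.
rewrite eX eS -!muln2 in lt *; lia.
Qed.

Lemma W_all A B : A != fset0 -> B != fset0 -> W A B.
Proof.
move=> An Bn.
suff : forall n A B, A != fset0 -> B != fset0 -> (#|` sumset A B| < n)%N -> W A B.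
  by apply; [exact: An | exact: Bn | exact: ltnSn].
elim=> [|n IHn] X Y Xn Yn lt; first by [].
case: (ltnP #|` sumset X Y| n) => [lt' | ge]; first exact: IHn.
apply: (@lvl2 n IHn ((n.*2 - (#|` X| + #|` Y|)).+1)) => //; lia.
Qed.

End Assembly.


Lemma kneser (G : zmodType) (A B : {fset G}) : A != fset0 -> B != fset0 ->
  (#|` sumset A (stab (sumset A B))| + #|` sumset B (stab (sumset A B))| <=
   #|` sumset A B| + #|` stab (sumset A B)|)%N.
Proof.
move=> An Bn; have Sn := sumset_neq0 An Bn.
have AHn : sumset A (stab (sumset A B)) != fset0.
  exact: neq0_sub An (sumset_stab_sub Sn _).
have BHn : sumset B (stab (sumset A B)) != fset0.
  exact: neq0_sub Bn (sumset_stab_sub Sn _).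
have := W_all AHn BHn; rewrite /W sumset_stab2 // sumset_stab //.
Qed.

Lemma stab_unique (G : zmodType) (C H : {fset G}) : C != fset0 ->
  is_stabilizer C H -> H = stab C.
Proof.
move=> Cn hs; apply/fsetP=> g; apply/idP/idP.
  move=> /hs e; apply/(stabE g Cn) => c cC; rewrite -e; exact: mem_translate.
by move=> /stab_translate /hs.
Qed.

Unset Implicit Arguments.
Theorem lemma2p6 (G : zmodType) (A B H : {fset G}) :
  A != fset0 -> B != fset0 ->
  is_stabilizer (sumset A B) H -> is_stabilizer B H ->
  forall x : G,
    (#|` sumset (A `|` [fset x]) B| + #|` H| >=
     #|` sumset (A `|` [fset x]) H| + #|` sumset B H|)%N.
Proof.
move=> An Bn hS hB x.
have Sn := sumset_neq0 An Bn.
have eH := stab_unique Sn hS.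
set A' := A `|` [fset x].
have A'n : A' != fset0 by apply: neq0_sub An (fsubsetUl _ _).
have sSS : sumset A B `<=` sumset A' B by apply: sumset_sub; [apply: fsubsetUl | apply: fsubset_refl].
case: (boolP (sumset A' B == sumset A B)) => [/eqP e | ne].
  have := kneser A'n Bn; rewrite e -eH; lia.
have /fsubsetPn[y yS' ynS] : ~~ (sumset A' B `<=` sumset A B).
  by apply: contra ne => s; rewrite eqEfsubset s sSS.
case/sumsetP: yS' ynS => u [v [uA' vB ->]] ynS.
have Hn : H != fset0 by rewrite eH; apply/fset0Pn; exists 0%R; apply: stab0.
have sub1 : translate (u + v)%R H `<=` sumset A' B `\` sumset A B.
  apply/fsubsetP=> z; rewrite translateP => hH; rewrite in_fsetD.
  have -> : z = ((u + v) + (z - (u + v)))%R by rewrite addrC subrK.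
  apply/andP; split.
    apply: contra ynS => yhS.
    have nh : (- (z - (u + v)))%R \in stab (sumset A B).
      by apply: stabN => //; rewrite -eH.
    by have := stab_addr nh yhS; rewrite addrK.
  rewrite -addrA; apply: mem_sumset => //.
  have e := proj1 (hB (z - (u + v))%R) hH.
  by rewrite addrC -e; apply: mem_translate.
have c1 := fsubset_leq_card sub1; rewrite card_translate cardfsDS // in c1.
have sub2 : sumset A' H `<=` sumset A H `|` translate x H.
  apply/fsubsetP=> z /sumsetP[w [h [wA' hH ->]]]; rewrite in_fsetU.
  move: wA'; rewrite in_fsetU in_fset1 => /orP[wA | /eqP ->].
    by rewrite mem_sumset.
  by rewrite mem_translate ?orbT.
have c2 := fsubset_leq_card sub2.
have c3 := cardfsUI (sumset A H) (translate x H); rewrite card_translate in c3.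
have := kneser An Bn; rewrite -eH.
have := fsubset_leq_card sSS.
lia.
Qed.
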